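(* Let $R$ be an irreducible reduced finite root system with root lattice $X=\mathbb{Z}R$ and $\check X=\operatorname{Hom}(X,\mathbb{Z})$. An automorphism $\sigma\in\operatorname{Aut}(R)$ preserves some base of $R$ if and only if no root $\alpha\in R$ vanishes identically on the fixed-point sublattice $\check X^\sigma=\{\check v\in\check X:\sigma\check v=\check v\}$.
   Context: $\operatorname{Aut}(R)$ denotes the group of linear automorphisms of $\mathbb{R}\otimes X$ preserving $R$, acting on $\check X$ by duality. *)

(* Defs.v *)
From HB Require Import structures.
From mathcomp Require Import all_boot all_order all_algebra.
Set Implicit Arguments. Unset Strict Implicit. Unset Printing Implicit Defensive.
Import Order.TTheory GRing.Theory Num.Theory.
Local Open Scope ring_scope.

Section RootSystems.
Variables (K : realFieldType) (n : nat).

Definition pair (v : 'rV[K]_n) (phi : 'cV[K]_n) : K := (v *m phi) 0 0.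

Definition is_intK (x : K) : Prop := exists z : int, x = z%:~R.

Definition mx_of (s : seq 'rV[K]_n) : 'M[K]_(size s, n) := \matrix_(i < size s) s`_i.

Definition refl (alpha : 'rV[K]_n) (phi : 'cV[K]_n) (v : 'rV[K]_n) : 'rV[K]_n :=
  v - pair v phi *: alpha.

Definition root_system (Rs : seq 'rV[K]_n) (cr : 'rV[K]_n -> 'cV[K]_n) : Prop :=
  [/\ uniq Rs, (0 : 'rV[K]_n) \notin Rs, row_full (mx_of Rs) &
   forall alpha, alpha \in Rs ->
     [/\ pair alpha (cr alpha) = 2,
         forall beta, beta \in Rs -> refl alpha (cr alpha) beta \in Rs
       & forall beta, beta \in Rs -> is_intK (pair beta (cr alpha))]].

Definition reduced_rs (Rs : seq 'rV[K]_n) : Prop :=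
  forall alpha (c : K), alpha \in Rs -> c *: alpha \in Rs -> c = 1 \/ c = -1.

Definition irreducible_rs (Rs : seq 'rV[K]_n) (cr : 'rV[K]_n -> 'cV[K]_n) : Prop :=
  Rs != [::] /\
  ~ (exists P : pred 'rV[K]_n,
       [/\ has P Rs, has (predC P) Rs &
        forall alpha beta, alpha \in Rs -> beta \in Rs -> P alpha -> ~~ P beta ->
          pair beta (cr alpha) = 0]).

Definition aut_rs (Rs : seq 'rV[K]_n) (S : 'M[K]_n) : Prop :=
  S \in unitmx /\ [seq a *m S | a <- Rs] =i Rs.

Definition is_base (Rs B : seq 'rV[K]_n) : Prop :=
  [/\ uniq B, {subset B <= Rs}, row_free (mx_of B), row_full (mx_of B) &
   forall alpha, alpha \in Rs ->
     exists c : 'I_(size B) -> int,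
       alpha = \sum_(i < size B) (c i)%:~R *: B`_i /\
       ((forall i, 0 <= c i) \/ (forall i, c i <= 0))].

(* coweight lattice Xcheck = Hom(ZR, Z), realised as the linear functionals on
   V = R (x) ZR taking integer values on R *)
Definition in_Xcheck (Rs : seq 'rV[K]_n) (phi : 'cV[K]_n) : Prop :=
  forall alpha, alpha \in Rs -> is_intK (pair alpha phi).

(* phi is fixed by the dual action of S  (phi o S^-1 = phi, i.e. S phi = phi) *)
Definition fixed_dual (S : 'M[K]_n) (phi : 'cV[K]_n) : Prop := S *m phi = phi.

End RootSystems.

(* Main.v *)
Require Import Defs.
From HB Require Import structures.
From mathcomp Require Import all_boot all_order all_algebra all_fingroup.
From mathcomp Require Import zify ring lra.
From Stdlib Require Import Classical.
Set Implicit Arguments. Unset Strict Implicit. Unset Printing Implicit Defensive.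
Import Order.TTheory GRing.Theory Num.Theory.
Local Open Scope ring_scope.
Section Basics.
Variables (K : realFieldType) (n : nat).
Implicit Types (v w : 'rV[K]_n) (phi psi : 'cV[K]_n).

Lemma pairD v w phi : pair (v + w) phi = pair v phi + pair w phi.
Proof. by rewrite /pair mulmxDl mxE. Qed.
Lemma pairZ (a : K) v phi : pair (a *: v) phi = a * pair v phi.
Proof. by rewrite /pair -scalemxAl mxE. Qed.
Lemma pairN v phi : pair (- v) phi = - pair v phi.
Proof. by rewrite /pair mulNmx mxE. Qed.
Lemma pairB v w phi : pair (v - w) phi = pair v phi - pair w phi.
Proof. by rewrite pairD pairN. Qed.
Lemma pair0 phi : pair 0 phi = 0.
Proof. by rewrite /pair mul0mx mxE. Qed.
Lemma pairDr v phi psi : pair v (phi + psi) = pair v phi + pair v psi.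
Proof. by rewrite /pair mulmxDr mxE. Qed.
Lemma pairZr (a : K) v phi : pair v (a *: phi) = a * pair v phi.
Proof. by rewrite /pair -scalemxAr mxE. Qed.
Lemma pair_sum I (r : seq I) (P : pred I) (F : I -> 'rV[K]_n) phi :
  pair (\sum_(i <- r | P i) F i) phi = \sum_(i <- r | P i) pair (F i) phi.
Proof.
elim/big_rec2: _ => [|i x y _ <-]; first exact: pair0.
by rewrite pairD.
Qed.

Lemma row_mx_of (s : seq 'rV[K]_n) (i : 'I_(size s)) : row i (mx_of s) = s`_i.
Proof. by apply/rowP => j; rewrite /mx_of !mxE. Qed.

Lemma mx_of_mul (s : seq 'rV[K]_n) phi (i : 'I_(size s)) :
  (mx_of s *m phi) i 0 = pair s`_i phi.
Proof. by rewrite -row_mx_of /pair -row_mul [RHS]mxE. Qed.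

Lemma is_intK_int (z : int) : is_intK (z%:~R : K).
Proof. by exists z. Qed.
Lemma is_intKD (x y : K) : is_intK x -> is_intK y -> is_intK (x + y).
Proof. by move=> [a ->] [b ->]; exists (a + b); rewrite rmorphD. Qed.
Lemma is_intKM (x y : K) : is_intK x -> is_intK y -> is_intK (x * y).
Proof. by move=> [a ->] [b ->]; exists (a * b); rewrite rmorphM. Qed.

End Basics.

Section Forward.
Variables (K : realFieldType) (n : nat) (Rs B : seq 'rV[K]_n) (S : 'M[K]_n).
Hypothesis hB : is_base Rs B.
Hypothesis hSB : [seq b *m S | b <- B] =i B.

Lemma forward_phi : exists phi : 'cV[K]_n,
  [/\ in_Xcheck Rs phi, fixed_dual S phi &
      forall alpha, alpha \in Rs -> alpha != 0 -> pair alpha phi != 0].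
Proof.
case: hB => uB sBR frB fuB hc.
set M := mx_of B.
have trfull : row_full M^T by rewrite /row_full mxrank_tr.
pose one : 'cV[K]_(size B) := const_mx 1.
pose phi := (one^T *m pinvmx M^T)^T.
have Mphi : M *m phi = one.
  by rewrite /phi -[M]trmxK -trmx_mul trmxK mulmxKpV ?trmxK // submx_full.
have phib : forall i : 'I_(size B), pair B`_i phi = 1.
  by move=> i; rewrite -mx_of_mul -/M Mphi mxE.
exists phi; split.
- move=> a /hc [c [-> _]]; rewrite pair_sum.
  exists (\sum_i c i); rewrite rmorph_sum; apply: eq_bigr => i _.
  by rewrite pairZ phib mulr1.
- rewrite /fixed_dual; apply: (row_full_inj fuB); rewrite Mphi.
  rewrite mulmxA; apply/colP => i; rewrite [RHS]mxE.
  transitivity ((row i (M *m S *m phi)) 0 0); first by rewrite [RHS]mxE.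
  rewrite !row_mul row_mx_of.
  have : B`_i *m S \in B by rewrite -hSB; apply/mapP; exists B`_i => //; rewrite mem_nth.
  by move=> /(nthP 0) [j jB <-]; have := phib (Ordinal jB); rewrite /pair.
- move=> a /hc [c [ea hs]] a0; rewrite ea pair_sum.
  under eq_bigr => i _ do rewrite pairZ phib mulr1.
  rewrite -rmorph_sum intr_eq0.
  apply: contra a0 => /eqP s0; rewrite ea big1 // => i _.
  suff -> : c i = 0 by rewrite scale0r.
  case: hs => hs.
  + exact: (psumr_eq0P (fun j _ => hs j) s0).
  + have h2 : \sum_j - c j = 0 by rewrite sumrN s0 oppr0.
    have hs' : forall j : 'I_(size B), true -> 0 <= - c j by move=> j _; rewrite oppr_ge0.
    by apply/eqP; rewrite -oppr_eq0; apply/eqP; exact: (psumr_eq0P hs' h2 isT).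
Qed.
End Forward.

Section Form.
Variables (K : realFieldType) (n : nat) (Rs : seq 'rV[K]_n).
Hypothesis hfull : row_full (mx_of Rs).
Local Notation m := (size Rs).
Local Notation M := (mx_of Rs).

Definition Ninv := pinvmx M.
Lemma NM : Ninv *m M = 1%:M.
Proof. by rewrite /Ninv -[pinvmx M]mul1mx mulmxKpV // submx_full. Qed.

Definition gp (p : 'S_m) := Ninv *m row_perm p M.
Definition valid (p : 'S_m) := M *m gp p == row_perm p M.
Definition dot (u w : 'rV[K]_n) := \sum_j u 0 j * w 0 j.
Definition Qf (x y : 'rV[K]_n) := \sum_(p | valid p) dot (x *m gp p) (y *m gp p).

Lemma QL (a : K) x y z : Qf (a *: x + y) z = a * Qf x z + Qf y z.
Proof.
rewrite /Qf mulr_sumr -big_split; apply: eq_bigr => p _.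
rewrite /dot mulr_sumr -big_split; apply: eq_bigr => j _.
rewrite mulmxDl -scalemxAl; set u := x *m _; set w := y *m _; by rewrite !mxE mulrDl -mulrA.
Qed.
Lemma Qsym x y : Qf x y = Qf y x.
Proof. by apply: eq_bigr => p _; apply: eq_bigr => j _; rewrite mulrC. Qed.

Lemma QD1 x y z : Qf (x + y) z = Qf x z + Qf y z.
Proof. by rewrite -[x]scale1r QL mul1r scale1r. Qed.
Lemma Q01 z : Qf 0 z = 0.
Proof. by rewrite /Qf big1 // => p _; rewrite /dot big1 // => j _; rewrite mul0mx mxE mul0r. Qed.
Lemma QZ1 a x z : Qf (a *: x) z = a * Qf x z.
Proof. by rewrite -[a *: x]addr0 QL Q01 addr0. Qed.
Lemma QN1 x z : Qf (- x) z = - Qf x z.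
Proof. by rewrite -scaleN1r QZ1 mulN1r. Qed.
Lemma QB1 x y z : Qf (x - y) z = Qf x z - Qf y z.
Proof. by rewrite QD1 QN1. Qed.
Lemma QD2 x y z : Qf z (x + y) = Qf z x + Qf z y.
Proof. by rewrite Qsym QD1 !(Qsym z). Qed.
Lemma QZ2 a x z : Qf z (a *: x) = a * Qf z x.
Proof. by rewrite Qsym QZ1 Qsym. Qed.
Lemma QN2 x z : Qf z (- x) = - Qf z x.
Proof. by rewrite Qsym QN1 Qsym. Qed.
Lemma QB2 x y z : Qf z (x - y) = Qf z x - Qf z y.
Proof. by rewrite Qsym QB1 !(Qsym z). Qed.

Lemma gp1 : gp 1%g = 1%:M.
Proof. by rewrite /gp row_perm1 NM. Qed.
Lemma valid1 : valid 1%g.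
Proof. by rewrite /valid gp1 mulmx1 row_perm1. Qed.

Lemma dot_ge0 u : 0 <= dot u u.
Proof. by apply: sumr_ge0 => j _; rewrite -expr2 sqr_ge0. Qed.
Lemma dot_gt0 u : u != 0 -> 0 < dot u u.
Proof.
move=> u0; rewrite lt_def dot_ge0 andbT; apply: contra u0.
rewrite /dot psumr_eq0 => [/allP h|j _]; last by rewrite -expr2 sqr_ge0.
apply/eqP/rowP => j; rewrite mxE.
by have /implyP/(_ isT) := h j (mem_index_enum _); rewrite mulf_eq0 orbb => /eqP.
Qed.

Lemma Qpos x : x != 0 -> 0 < Qf x x.
Proof.
move=> x0; rewrite /Qf (bigD1 (1%g : 'S_m)) ?valid1 //= gp1 mulmx1.
by rewrite ltr_wpDr ?dot_gt0 // sumr_ge0 // => p _; exact: dot_ge0.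
Qed.
Lemma Q0 x : Qf x x = 0 -> x = 0.
Proof. by move=> h; apply/eqP; apply: contraLR (eqxx (Qf x x)) => /Qpos; rewrite h lt_def eqxx. Qed.

Lemma row_perm_mul q (A : 'M[K]_(m, n)) (B : 'M[K]_n) :
  row_perm q (A *m B) = row_perm q A *m B.
Proof. by rewrite !row_permE mulmxA. Qed.

Lemma row_perm_inj q : injective (@row_perm K m n q).
Proof. by move=> A B h; rewrite -[A]row_perm1 -(mulVg q) row_permM h -row_permM mulVg row_perm1. Qed.

Section Inv.
Variables (h : 'M[K]_n) (q : 'S_m).
Hypothesis hh : h *m h = 1%:M.
Hypothesis Mh : M *m h = row_perm q M.

Lemma valid_shift p : valid p -> valid (q * p)%g /\ gp (q * p)%g = h *m gp p.
Proof.
move=> /eqP vp.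
have e : M *m (h *m gp p) = row_perm (q * p)%g M.
  by rewrite mulmxA Mh -row_perm_mul vp row_permM.
have g : gp (q * p)%g = h *m gp p by rewrite [LHS]/gp -e (mulmxA Ninv M) NM mul1mx.
by split => //; rewrite /valid g e.
Qed.

Lemma valid_unshift p : valid (q * p)%g -> valid p.
Proof.
move=> /eqP vp.
have e : M *m (h *m gp (q * p)%g) = row_perm p M.
  apply: (@row_perm_inj q).
  by rewrite row_perm_mul -Mh -mulmxA (mulmxA h h) hh mul1mx vp row_permM.
have g : gp p = h *m gp (q * p)%g by rewrite [LHS]/gp -e (mulmxA Ninv M) NM mul1mx.
by rewrite /valid g e.
Qed.

Lemma Qinv x y : Qf (x *m h) (y *m h) = Qf x y.
Proof.
rewrite /Qf [RHS](reindex_inj (mulgI q)) /= !big_mkcond /=.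
rewrite [RHS]big_mkcond; apply: eq_bigr => p _.
case vp : (valid p).
  by have [-> ->] := valid_shift vp; rewrite !mulmxA.
by case vq : (valid (q * p)%g) => //; rewrite (valid_unshift vq) in vp.
Qed.
End Inv.
End Form.

Lemma mx_ext (K : realFieldType) n (A B : 'M[K]_n) :
  (forall v : 'rV[K]_n, v *m A = v *m B) -> A = B.
Proof.
move=> h; apply/row_matrixP => i.
by rewrite -[A]mul1mx -[B]mul1mx !row_mul h.
Qed.

Section Roots.
Variables (K : realFieldType) (n : nat) (Rs : seq 'rV[K]_n) (cr : 'rV[K]_n -> 'cV[K]_n).
Hypothesis hR : root_system Rs cr.
Local Notation m := (size Rs).
Local Notation M := (mx_of Rs).

Lemma rs_uniq : uniq Rs. Proof. by case: hR. Qed.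
Lemma rs_nz : (0 : 'rV[K]_n) \notin Rs. Proof. by case: hR. Qed.
Lemma rs_full : row_full M. Proof. by case: hR. Qed.
Lemma rs_two a : a \in Rs -> pair a (cr a) = 2.
Proof. by case: hR => _ _ _ /(_ a) h /h []. Qed.
Lemma rs_refl a b : a \in Rs -> b \in Rs -> refl a (cr a) b \in Rs.
Proof. by case: hR => _ _ _ /(_ a) h /h [_ H _] /H. Qed.
Lemma rs_int a b : a \in Rs -> b \in Rs -> is_intK (pair b (cr a)).
Proof. by case: hR => _ _ _ /(_ a) h /h [_ _ H] /H. Qed.

Lemma rs_neg a : a \in Rs -> - a \in Rs.
Proof.
move=> aR; have := rs_refl aR aR; rewrite /refl rs_two //.
by rewrite scaler_nat mulr2n opprD addNKr.
Qed.

Definition hmx (a : 'rV[K]_n) : 'M[K]_n := 1%:M - cr a *m a.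

Lemma hmxE a v : v *m hmx a = refl a (cr a) v.
Proof.
rewrite /hmx /refl mulmxBr mulmx1 mulmxA [v *m cr a]mx11_scalar mul_scalar_mx.
by [].
Qed.

Lemma hmx_invol a : a \in Rs -> hmx a *m hmx a = 1%:M.
Proof.
move=> aR; apply: mx_ext => v; rewrite mulmx1 mulmxA !hmxE /refl.
rewrite pairB pairZ rs_two //.
have -> : pair v (cr a) - pair v (cr a) * 2 = - pair v (cr a) by ring.
by rewrite scaleNr opprK subrK.
Qed.

Lemma hmx_perm a : a \in Rs -> exists q : 'S_m, M *m hmx a = row_perm q M.
Proof.
move=> aR.
have inR : forall i : 'I_m, Rs`_i *m hmx a \in Rs.
  by move=> i; rewrite hmxE rs_refl // mem_nth.
pose f (i : 'I_m) : 'I_m := insubd i (index (Rs`_i *m hmx a) Rs).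
have fE : forall i, Rs`_(f i) = Rs`_i *m hmx a.
  by move=> i; rewrite val_insubd index_mem inR nth_index.
have finj : injective f.
  move=> i j /(congr1 (fun k : 'I_m => Rs`_k *m hmx a)); rewrite !fE.
  rewrite -!mulmxA hmx_invol // !mulmx1 => /eqP.
  by rewrite nth_uniq ?rs_uniq // => /eqP/val_inj.
exists (perm finj); apply/row_matrixP => i.
by rewrite row_mul row_mx_of row_permEsub row_rowsub row_mx_of permE fE.
Qed.

Lemma Qrefl a x : a \in Rs -> pair x (cr a) * Qf Rs a a = 2 * Qf Rs x a.
Proof.
move=> aR; have [q Mq] := hmx_perm aR.
have := Qinv rs_full (hmx_invol aR) Mq x a.
have e2 : forall v : 'rV[K]_n, v - 2 *: v = - v.
  by move=> v; rewrite scaler_nat mulr2n opprD addNKr.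
rewrite !hmxE /refl rs_two // e2 QN2 QB1 QZ1 => h.
set A := Qf Rs x a in h *; set B := Qf Rs a a in h *; nra.
Qed.

End Roots.

Section QSum.
Variables (K : realFieldType) (n : nat) (Rs : seq 'rV[K]_n).
Lemma QsumL (I : Type) (r : seq I) (P : pred I) (a : I -> K) (u : I -> 'rV[K]_n) y :
  Qf Rs (\sum_(i <- r | P i) a i *: u i) y = \sum_(i <- r | P i) a i * Qf Rs (u i) y.
Proof.
elim/big_rec2: _ => [|i s w _ <-]; first exact: Q01.
by rewrite QD1 QZ1.
Qed.
Lemma QsumR (I : Type) (r : seq I) (P : pred I) (a : I -> K) (u : I -> 'rV[K]_n) y :
  Qf Rs y (\sum_(i <- r | P i) a i *: u i) = \sum_(i <- r | P i) a i * Qf Rs y (u i).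
Proof.
by rewrite Qsym QsumL; apply: eq_bigr => i _; rewrite Qsym.
Qed.
End QSum.

Section Pos.
Variables (K : realFieldType) (n : nat) (Rs : seq 'rV[K]_n) (cr : 'rV[K]_n -> 'cV[K]_n).
Hypothesis hR : root_system Rs cr.
Hypothesis hred : reduced_rs Rs.
Variable phi : 'cV[K]_n.
Hypothesis hint : in_Xcheck Rs phi.
Hypothesis hnz : forall a, a \in Rs -> pair a phi != 0.

Definition pos (a : 'rV[K]_n) := 0 < pair a phi.
Definition simple (a : 'rV[K]_n) :=
  [&& a \in Rs, pos a & ~~ has (fun b => [&& pos b, a - b \in Rs & pos (a - b)]) Rs].
Definition Bs := filter simple Rs.

Lemma Qpos_rs a : a \in Rs -> 0 < Qf Rs a a.
Proof.
move=> aR; apply: Qpos; first exact: rs_full hR.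
by apply: contraNneq (rs_nz hR) => <-.
Qed.

Lemma nat_val a : a \in Rs -> pos a -> exists k : nat, pair a phi = k%:R.
Proof.
move=> aR; rewrite /pos; have [z ->] := hint aR; rewrite ltr0z.
by case: z => // k _; exists k.
Qed.

Lemma neg_not_pos a : a \in Rs -> ~~ pos a -> pos (- a).
Proof.
move=> aR; rewrite /pos pairN oppr_gt0 -leNgt le_eqVlt.
by rewrite (negbTE (hnz aR)).
Qed.

Definition cone (a : 'rV[K]_n) := exists c : 'I_(size Bs) -> int,
  (forall i, 0 <= c i) /\ a = \sum_(i < size Bs) (c i)%:~R *: Bs`_i.

Lemma cone_simple a : simple a -> cone a.
Proof.
move=> sa; have aB : a \in Bs by rewrite mem_filter sa (andP sa).1.
have jl : (index a Bs < size Bs)%N by rewrite index_mem.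
exists (fun i => ((val i == index a Bs) : nat)%:Z); split => [i|]; first by [].
rewrite (bigD1 (Ordinal jl)) //= eqxx big1 ?addr0 ?scale1r ?nth_index //.
move=> i /negPf ne; suff -> : (val i == index a Bs) = false by rewrite scale0r.
by apply: contraFF ne => /eqP e; apply/eqP/val_inj.
Qed.

Lemma cone_add a b : cone a -> cone b -> cone (a + b).
Proof.
move=> [c [c0 ->]] [d [d0 ->]]; exists (fun i => c i + d i); split.
  by move=> i; rewrite addr_ge0.
by rewrite -big_split; apply: eq_bigr => i _; rewrite rmorphD scalerDl.
Qed.

Lemma cone_pos a : a \in Rs -> pos a -> cone a.
Proof.
move=> aR pa; have [k ek] := nat_val aR pa.
elim/ltn_ind: k a aR pa ek => k IH a aR pa ek.
case sa : (simple a); first exact: cone_simple.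
move: sa; rewrite /simple aR pa /= => /negbFE /hasP [b bR /and3P [pb abR pab]].
have [kb ekb] := nat_val bR pb; have [kc ekc] := nat_val abR pab.
have ek2 : k = (kb + kc)%N.
  by apply/eqP; rewrite -(eqr_nat K) natrD -ek -ekb -ekc -pairD addrC subrK.
have kb0 : (0 < kb)%N by rewrite -(ltr_nat K) -ekb.
have kc0 : (0 < kc)%N by rewrite -(ltr_nat K) -ekc.
rewrite -[a](subrK b) addrC; apply: cone_add.
  by apply: (IH kb) => //; lia.
by apply: (IH kc) => //; lia.
Qed.


Lemma simple_in a : simple a -> a \in Rs.
Proof. by case/and3P. Qed.
Lemma simple_pos a : simple a -> pos a.
Proof. by case/and3P. Qed.

Lemma no_one a b : simple a -> simple b -> pair a (cr b) = 1 -> False.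
Proof.
move=> sa sb e.
have aR := simple_in sa; have bR := simple_in sb.
have abR : a - b \in Rs by have := rs_refl hR bR aR; rewrite /refl e scale1r.
case pab : (pos (a - b)).
  move: sa => /and3P [_ _ /hasP []]; exists b => //.
  by rewrite (simple_pos sb) abR pab.
have pba : pos (b - a) by rewrite -opprB neg_not_pos // pab.
move: sb => /and3P [_ _ /hasP []]; exists a => //.
by rewrite (simple_pos sa) pba -opprB (rs_neg hR).
Qed.

Lemma strict_cs a b : a \in Rs -> b \in Rs -> a != b -> a != - b ->
  Qf Rs a b ^+ 2 < Qf Rs a a * Qf Rs b b.
Proof.
move=> aR bR ab anb.
have qb := Qpos_rs bR.
set v := Qf Rs b b *: a - Qf Rs a b *: b.
have v0 : v != 0.
  apply/negP => /eqP /eqP; rewrite subr_eq0 => /eqP e.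
  have e2 : (Qf Rs a b / Qf Rs b b) *: b = a.
    by rewrite mulrC -scalerA -e scalerA mulVf ?scale1r // gt_eqF.
  have := @hred b (Qf Rs a b / Qf Rs b b) bR; rewrite e2 => /(_ aR) [t1|t1].
    by move: ab; rewrite -e2 t1 scale1r eqxx.
  by move: anb; rewrite -e2 t1 scaleN1r eqxx.
have := Qpos (rs_full hR) v0.
rewrite /v QB1 !QB2 !QZ1 !QZ2 (Qsym Rs b a).
set A := Qf Rs a a; set B := Qf Rs b b in qb *; set C := Qf Rs a b => h.
nra.
Qed.

Lemma Qsimple a b : simple a -> simple b -> a != b -> Qf Rs a b <= 0.
Proof.
move=> sa sb ab; rewrite leNgt; apply/negP => qab.
have aR := simple_in sa; have bR := simple_in sb.
have anb : a != - b.
  apply/eqP => e; have := simple_pos sa; rewrite e /pos pairN oppr_gt0.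
  by move=> /lt_trans /(_ (simple_pos sb)); rewrite ltxx.
have cs := strict_cs aR bR ab anb.
have qa := Qpos_rs aR; have qb := Qpos_rs bR.
have e1 := Qrefl hR a bR; have e2 := Qrefl hR b aR.
rewrite (Qsym Rs b a) in e2.
have [x ex] := rs_int hR bR aR; have [y ey] := rs_int hR aR bR.
rewrite ex in e1; rewrite ey in e2.
have x0 : (0 : K) < x%:~R by nra.
have y0 : (0 : K) < y%:~R by nra.
have xy : (x * y)%:~R < (4 : K) by rewrite rmorphM; nra.
rewrite ltr0z in x0; rewrite ltr0z in y0.
have xy' : (x * y < 4)%R by rewrite -(ltr_int K).
have [x1|y1] : x = 1 \/ y = 1 by lia.
  by apply: (no_one sa sb); rewrite ex x1.
by apply: (no_one sb sa); rewrite ey y1.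
Qed.


Lemma Bs_simple i : simple Bs`_i \/ (size Bs <= i)%N.
Proof.
case: (ltnP i (size Bs)) => [il|]; last by right.
by left; have := mem_nth 0 il; rewrite mem_filter => /andP [].
Qed.

Lemma Bs_free : row_free (mx_of Bs).
Proof.
apply: inj_row_free => v.
rewrite mulmx_sum_row; under eq_bigr => i _ do rewrite row_mx_of.
move=> hv.
pose P i := if 0 <= v 0 i then v 0 i else 0.
pose N i := if 0 <= v 0 i then 0 else - v 0 i.
have P0 i : 0 <= P i by rewrite /P; case: ifP.
have N0 i : 0 <= N i by rewrite /N; case: ifPn => // h; rewrite oppr_ge0; move: h; rewrite -ltNge => /ltW.
have PN i : v 0 i = P i - N i by rewrite /P /N; case: ifP => _; rewrite ?subr0 ?sub0r ?opprK.
have PNm i : P i * N i = 0 by rewrite /P /N; case: ifP => _; rewrite ?mulr0 ?mul0r.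
set w := \sum_i P i *: Bs`_i; set w' := \sum_i N i *: Bs`_i.
have ww : w = w'.
  apply/eqP; rewrite -subr_eq0 -sumrB; apply/eqP; rewrite -[RHS]hv; apply: eq_bigr => i _.
  by rewrite -scalerBl -PN.
have sim (i : 'I_(size Bs)) : simple Bs`_i by case: (Bs_simple i) => //; rewrite leqNgt ltn_ord.
have Qw : Qf Rs w w <= 0.
  rewrite {2}ww /w QsumL; apply: sumr_le0 => i _; rewrite /w' QsumR mulr_sumr.
  apply: sumr_le0 => j _.
  case: (eqVneq i j) => [<-|ij].
    by rewrite mulrA PNm mul0r.
  rewrite mulrA mulr_ge0_le0 ?mulr_ge0 // Qsimple //.
  apply: contra ij => /eqP e; apply/eqP/val_inj/eqP.
  by rewrite -(nth_uniq 0 (ltn_ord i) (ltn_ord j) (filter_uniq _ (rs_uniq hR))) e.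
have w0 : w = 0.
  apply: (Q0 (rs_full hR)); apply/eqP; rewrite eq_le Qw /=.
  case: (eqVneq w 0) => [->|wn0]; first by rewrite Q01.
  exact/ltW/(Qpos (rs_full hR)).
have coef0 (f : 'I_(size Bs) -> K) : (forall i, 0 <= f i) ->
    \sum_i f i *: Bs`_i = 0 -> forall i, f i = 0.
  move=> f0 e i.
  have := congr1 (fun u => pair u phi) e; rewrite /= pair0 pair_sum.
  under eq_bigr => k _ do rewrite pairZ.
  move=> s0.
  have h : forall k : 'I_(size Bs), true -> 0 <= f k * pair Bs`_k phi.
    by move=> k _; rewrite mulr_ge0 // ltW //; exact: (simple_pos (sim k)).
  have /eqP := psumr_eq0P h s0 (i := i) isT.
  rewrite mulf_eq0 => /orP [/eqP //|].
  by rewrite gt_eqF //; exact: (simple_pos (sim i)).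
have Pz := coef0 P P0 w0.
have Nz := coef0 N N0 (etrans (esym ww) w0).
by apply/rowP => i; rewrite PN Pz Nz subr0 mxE.
Qed.


Lemma Bs_expand a : a \in Rs -> exists c : 'I_(size Bs) -> int,
  a = \sum_(i < size Bs) (c i)%:~R *: Bs`_i /\
  ((forall i, 0 <= c i) \/ (forall i, c i <= 0)).
Proof.
move=> aR; case pa : (pos a).
  by have [c [c0 e]] := cone_pos aR pa; exists c; split => //; left.
have [c [c0 e]] := cone_pos (rs_neg hR aR) (neg_not_pos aR (negbT pa)).
exists (fun i => - c i); split; last by right => i; rewrite oppr_le0.
rewrite -[a]opprK e -sumrN; apply: eq_bigr => i _.
by rewrite rmorphN scaleNr.
Qed.

Lemma Bs_full : row_full (mx_of Bs).
Proof.
have sub : (mx_of Rs <= mx_of Bs)%MS.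
  apply/row_subP => i; rewrite row_mx_of.
  have [c [e _]] := Bs_expand (mem_nth 0 (ltn_ord i)); rewrite e.
  have -> : \sum_(i0 < size Bs) (c i0)%:~R *: Bs`_i0 =
     (\row_j ((c j)%:~R : K)) *m mx_of Bs.
    by rewrite mulmx_sum_row; apply: eq_bigr => j _; rewrite row_mx_of mxE.
  exact: submxMl.
rewrite /row_full eqn_leq rank_leq_col /=.
have := mxrankS sub; have := rs_full hR; rewrite /row_full => /eqP ->.
by [].
Qed.

Lemma Bs_base : is_base Rs Bs.
Proof.
split.
- exact: filter_uniq (rs_uniq hR).
- by move=> b; rewrite mem_filter => /andP [].
- exact: Bs_free.
- exact: Bs_full.
- exact: Bs_expand.
Qed.

Section Stab.
Variable S : 'M[K]_n.
Hypothesis hS : aut_rs Rs S.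
Hypothesis hfix : S *m phi = phi.

Lemma pairS v : pair (v *m S) phi = pair v phi.
Proof. by rewrite /pair -mulmxA hfix. Qed.
Lemma posS v : pos (v *m S) = pos v.
Proof. by rewrite /pos pairS. Qed.
Lemma inS a : a \in Rs -> a *m S \in Rs.
Proof. by move=> aR; rewrite -hS.2; apply: map_f. Qed.
Lemma preS a : a \in Rs -> exists2 a', a' \in Rs & a = a' *m S.
Proof. by rewrite -hS.2 => /mapP. Qed.
Lemma Sinj : injective (fun v : 'rV[K]_n => v *m S).
Proof. by apply: row_free_inj; rewrite row_free_unit hS.1. Qed.
Lemma inS' a : a *m S \in Rs -> a \in Rs.
Proof. by move=> /preS [a' a'R /Sinj ->]. Qed.

Lemma simpleS a : simple a -> simple (a *m S).
Proof.
move=> /and3P [aR pa nh]; rewrite /simple inS // posS pa /=.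
apply: contra nh => /hasP [b bR /and3P [pb abR pab]].
have [b' b'R eb] := preS bR.
apply/hasP; exists b' => //.
rewrite -posS -eb pb /=.
have e : a *m S - b = (a - b') *m S by rewrite mulmxBl eb.
by rewrite e in abR pab; rewrite inS' // -posS.
Qed.

Lemma simpleS' a : simple (a *m S) -> simple a.
Proof.
move=> /and3P [aR pa nh]; rewrite /simple inS' //= -posS pa /=.
apply: contra nh => /hasP [b bR /and3P [pb abR pab]].
apply/hasP; exists (b *m S); first exact: inS.
by rewrite posS pb -mulmxBl inS // posS.
Qed.

Lemma Bs_stable : [seq b *m S | b <- Bs] =i Bs.
Proof.
move=> x; apply/mapP/idP.
  by move=> [b]; rewrite !mem_filter => /andP [sb _] ->; rewrite simpleS // inS ?simple_in.
rewrite mem_filter => /andP [sx xR].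
have [x' x'R ex] := preS xR; exists x' => //.
by rewrite mem_filter x'R andbT; apply: simpleS'; rewrite -ex.
Qed.
End Stab.

End Pos.

Section Generic.
Variables (K : realFieldType) (n : nat) (Rs : seq 'rV[K]_n) (S : 'M[K]_n).
Hypothesis H : forall a, a \in Rs -> exists phi : 'cV[K]_n,
  [/\ in_Xcheck Rs phi, S *m phi = phi & pair a phi != 0].

Lemma avoid (a b : seq K) : (forall i, (i < size a)%N -> a`_i != 0 \/ b`_i != 0) ->
  exists k : nat, forall i, (i < size a)%N -> a`_i + k%:R * b`_i != 0.
Proof.
move=> hab.
pose p := \prod_(i <- iota 0 (size a)) ((a`_i)%:P + b`_i *: 'X).
have p0 : p != 0.
  rewrite prodf_seq_neq0; apply/allP => i; rewrite mem_iota add0n => il /=.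
  apply/negP => /eqP e.
  have e0 := congr1 (fun q : {poly K} => q`_0) e.
  have e1 := congr1 (fun q : {poly K} => q`_1) e.
  move: e0 e1; rewrite /= !coefD !coefC !coefZ !coefX /=.
  rewrite mulr0 addr0 mulr1 add0r => e0 e1.
  by case: (hab i il); rewrite ?e0 ?e1 eqxx.
have [k hk] : exists k : 'I_(size p), p.[(k : nat)%:R] != 0.
  apply/existsP; case/boolP: [exists k : 'I_(size p), p.[(k : nat)%:R] != 0] => // /existsPn hall.
  exfalso.
  have : p = 0.
    apply: (@roots_geq_poly_eq0 _ _ [seq (k : nat)%:R | k <- iota 0 (size p)]).
    - apply/allP => x /mapP [k]; rewrite mem_iota add0n => kl ->.
      by have := hall (Ordinal kl); rewrite negbK.
    - rewrite map_inj_uniq ?iota_uniq // => x y /eqP; rewrite eqr_nat => /eqP //.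
    - by rewrite size_map size_iota.
  by move/eqP; rewrite (negbTE p0).
exists k => i il.
move: hk; rewrite horner_prod prodf_seq_neq0 => /allP /(_ i).
rewrite mem_iota add0n il => /(_ isT) /=.
by rewrite hornerD hornerC hornerZ hornerX mulrC.
Qed.

Lemma in_Xcheck0 : in_Xcheck Rs 0.
Proof. by move=> a _; exists 0; rewrite /pair mulmx0 mxE. Qed.

Lemma in_XcheckL (k : nat) psi phi : in_Xcheck Rs psi -> in_Xcheck Rs phi ->
  in_Xcheck Rs (psi + k%:R *: phi).
Proof.
move=> h1 h2 a aR; rewrite pairDr pairZr.
apply: is_intKD; first exact: h1.
by apply: is_intKM; [exists k | exact: h2].
Qed.

Lemma generic_l (l : seq 'rV[K]_n) : {subset l <= Rs} -> exists psi : 'cV[K]_n,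
  [/\ in_Xcheck Rs psi, S *m psi = psi & forall b, b \in l -> pair b psi != 0].
Proof.
elim: l => [|a l IH] sub.
  by exists 0; split => //; [exact: in_Xcheck0 | rewrite mulmx0].
have [psi [i1 f1 nz1]] := IH (fun x xl => sub x (@mem_behead _ (a :: l) x xl)).
have [phi [i2 f2 nz2]] := H (sub a (mem_head _ _)).
pose sa := [seq pair b psi | b <- a :: l].
pose sb := [seq pair b phi | b <- a :: l].
have hab : forall i, (i < size sa)%N -> sa`_i != 0 \/ sb`_i != 0.
  case => [|i] il; first by right.
  rewrite size_map /= ltnS in il.
  by left; rewrite /sa /= (nth_map 0) // nz1 // mem_nth.
have [k hk] := avoid hab.
exists (psi + k%:R *: phi); split.
- exact: in_XcheckL.
- by rewrite mulmxDr -scalemxAr f1 f2.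
- move=> b bl; have il : (index b (a :: l) < size sa)%N by rewrite size_map index_mem.
  have := hk _ il; rewrite /sa /sb !(nth_map 0) -?(size_map (fun b => pair b psi)) //.
  by rewrite nth_index // pairDr pairZr.
Qed.

Lemma generic : exists psi : 'cV[K]_n,
  [/\ in_Xcheck Rs psi, S *m psi = psi & forall b, b \in Rs -> pair b psi != 0].
Proof. exact: generic_l. Qed.
End Generic.

Unset Implicit Arguments.
Theorem mainTheorem2 (K : realFieldType) (n : nat) (Rs : seq 'rV[K]_n)
    (cr : 'rV[K]_n -> 'cV[K]_n) (S : 'M[K]_n)
    (hR : root_system Rs cr) (hred : reduced_rs Rs) (hirr : irreducible_rs Rs cr)
    (hS : aut_rs Rs S) :
  (exists B : seq 'rV[K]_n, is_base Rs B /\ [seq b *m S | b <- B] =i B) <->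
  (forall alpha, alpha \in Rs ->
     ~ (forall phi : 'cV[K]_n, in_Xcheck Rs phi -> fixed_dual S phi ->
          pair alpha phi = 0)).
Proof.
split.
  move=> [B [hB hSB]] a aR h.
  have [phi [i1 f1 nz]] := forward_phi hB hSB.
  have a0 : a != 0 by apply: contraNneq (rs_nz hR) => <-.
  by move: (nz a aR a0); rewrite (h phi i1 f1) eqxx.
move=> H.
have H' : forall a, a \in Rs -> exists phi : 'cV[K]_n,
    [/\ in_Xcheck Rs phi, S *m phi = phi & pair a phi != 0].
  move=> a aR; have := H a aR => /not_all_ex_not [phi hphi].
  exists phi.
  have [h1 h2] := imply_to_and _ _ hphi.
  have [h3 h4] := imply_to_and _ _ h2.
  by split => //; apply/eqP.
have [psi [i1 f1 nz]] := generic H'.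
exists (Bs Rs psi); split.
  exact: (Bs_base hR hred i1 nz).
move=> x; exact: (Bs_stable hS f1).
Qed.
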